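(* In the u2D Toda setting described in the context, fix integers $l,m,n$. Then \[ \begin{aligned} &\tau(l+1,m,n)=\max_{0\le k_1\le N}\bigl(\tau_c(-1,N-k_1)-k_1\delta\bigr),\qquad \tau(l,m-1,n)=\max_{0\le k_2\le N}\bigl(\tau_c(k_2-1,N)-k_2\varepsilon\bigr),\\ &\tau(l+1,m,n-1)=\max_{0\le k_1\le N}\bigl(\tau_c(N-k_1-1,N)-k_1\delta\bigr),\qquad \tau(l,m-1,n+1)=\max_{0\le k_2\le N}\bigl(\tau_c(-1,k_2)-k_2\varepsilon\bigr),\\ &\tau(l,m,n)=\tau_c(-1,N),\qquad \tau(l+1,m-1,n)=\max_{0\le k_1,k_2\le N}\bigl(\Psi(k_1,k_2)-k_1\delta-k_2\varepsilon\bigr), \end{aligned} \] where for $0\le k_1,k_2\le N$ \[ \Psi(k_1,k_2)=\begin{cases} \max_{0\le i\le k_2}\tau_c(k_2-i-1,\,N-k_1+i) & (k_1\ge k_2\text{ and }N-k_1\ge k_2),\\ \max_{0\le i\le k_1}\tau_c(k_2-i-1,\,N-k_1+i) & (N-k_1\ge k_2\ge k_1),\\ \max_{0\le i\le N-k_1}\tau_c(i-1,\,N-k_1+k_2-i) & (k_1\ge k_2\ge N-k_1),\\ \max_{0\le i\le N-k_2}\tau_c(N-k_1-i-1,\,k_2+i) & (k_2\ge N-k_1\text{ and }k_2\ge k_1). \end{cases} \] Moreover, for $1\le k_1,k_2\le N$: $\Psi(k_1,k_2)=\max(\Psi(k_1-1,k_2-1),\tau_c(k_2-1,N-k_1))$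 if $k_2-1<N-k_1$; $\Psi(k_1-1,k_2-1)=\max(\Psi(k_1,k_2),\tau_c(N-k_1,k_2-1))$ if $k_2-1>N-k_1$; $\Psi(k_1,k_2)=\Psi(k_1-1,k_2-1)$ if $k_2-1=N-k_1$.
   Context: Ultradiscrete permanent (UP): for a real $N\times N$ matrix $A=(a_{ij})$, $\max A\equiv\max_{\pi}\sum_{i=1}^N a_{i\pi(i)}$ over all permutations $\pi$ of $\{1,\dots,N\}$; $\max[\bm{b}_1\ \dots\ \bm{b}_N]$ is the UP of the matrix with columns $\bm{b}_j$. u2D Toda setting: $N\ge1$; real $\delta,\varepsilon>0$; arbitrary real $r_i,c_i,c'_i$ ($1\le i\le N$); for integers $l,m,n$, $\eta_i(l,m,n)=\max(0,r_i-\delta)l-\max(0,-r_i-\varepsilon)m+r_in+c_i$, $\eta'_i(l,m,n)=\max(0,-r_i-\delta)l-\max(0,r_i-\varepsilon)m-r_in+c'_i$, $\phi_i(l,m,n)=\max(\eta_i(l,m,n),\eta'_i(l,m,n))$, and $\tau(l,m,n)=\max[\phi_i(l,m,n+j-1)]_{1\le i,j\le N}$. With $l,m,n$ fixed put $\bm{\phi}(j)=(\phi_i(l,m,n+j))_{1\le i\le N}$, and for $-1\le\alpha<\beta\le N$ let $\tau_c(\alpha,\beta)=\max[\bm{\phi}(-1)\ \dots\ \widehat{\bm{\phi}(\alpha)}\ \dots\ \widehat{\bm{\phi}(\beta)}\ \dots\ \bm{\phi}(N)]$, the UP of the $N$ columns $\bm{\phi}(j)$, $j\in\{-1,0,\dots,N\}\setminus\{\alpha,\beta\}$.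 *)

(* Defs.v *)
From HB Require Import structures.
From mathcomp Require Import all_boot all_order all_algebra all_fingroup.
Set Implicit Arguments. Unset Strict Implicit. Unset Printing Implicit Defensive.
Import Order.TTheory GRing.Theory Num.Theory.
Local Open Scope ring_scope.

(* Ultradiscrete permanent: max over permutations s of sum_i A i (s i).
   The identity permutation's value is used as the (absorbed) seed of the max. *)
Definition upm (R : realDomainType) (N : nat) (A : 'M[R]_N) : R :=
  \big[Num.max / \sum_(i < N) A i i]_(s : 'S_N) \sum_(i < N) A i (s i).

Definition maxto (R : realDomainType) (n : nat) (f : nat -> R) : R :=
  \big[Num.max / f 0%N]_(0 <= i < n.+1) f i.

Section U2DToda.
Variables (R : realFieldType) (N : nat) (d e : R) (r c c' : 'I_N -> R).

(* row index i : 'I_N stands for the paper's index i+1 *)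
Definition eta (i : 'I_N) (l m n : int) : R :=
  Num.max 0 (r i - d) *~ l - Num.max 0 (- r i - e) *~ m + r i *~ n + c i.
Definition eta' (i : 'I_N) (l m n : int) : R :=
  Num.max 0 (- r i - d) *~ l - Num.max 0 (r i - e) *~ m - r i *~ n + c' i.
Definition phi (i : 'I_N) (l m n : int) : R := Num.max (eta i l m n) (eta' i l m n).

(* tau(l,m,n) = UP [phi_i(l,m,n+j-1)]_{1<=i,j<=N}; column j : 'I_N is paper's j+1 *)
Definition tau (l m n : int) : R :=
  upm (\matrix_(i < N, j < N) phi i l m (n + (j : nat)%:Z)).

(* the column labels -1,0,...,N with alpha and beta removed, in increasing order *)
Definition cols (a b : int) : seq int :=
  [seq j <- [seq (k : nat)%:Z - 1 | k <- iota 0 N.+2] | (j != a) && (j != b)].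

Definition tauc (l m n : int) (a b : int) : R :=
  upm (\matrix_(i < N, j < N) phi i l m (n + nth 0 (cols a b) j)).

Definition Psi (l m n : int) (k1 k2 : nat) : R :=
  let K1 := (k1 : nat)%:Z in let K2 := (k2 : nat)%:Z in let NN := (N : nat)%:Z in
  if (K1 >= K2) && (NN - K1 >= K2) then
    maxto k2 (fun i => tauc l m n (K2 - i%:Z - 1) (NN - K1 + i%:Z))
  else if (NN - K1 >= K2) && (K2 >= K1) then
    maxto k1 (fun i => tauc l m n (K2 - i%:Z - 1) (NN - K1 + i%:Z))
  else if (K1 >= K2) && (K2 >= NN - K1) then
    maxto (N - k1) (fun i => tauc l m n (i%:Z - 1) (NN - K1 + K2 - i%:Z))
  else
    maxto (N - k2) (fun i => tauc l m n (NN - K1 - i%:Z - 1) (K2 + i%:Z)).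

End U2DToda.

(* Main.v *)
Require Import Defs.
From HB Require Import structures.
From mathcomp Require Import all_boot all_order all_algebra all_fingroup.
From mathcomp Require Import ring lra zify.
Import Order.TTheory GRing.Theory Num.Theory.
Local Open Scope ring_scope.
Set Implicit Arguments. Unset Strict Implicit. Unset Printing Implicit Defensive.

Ltac maxsplit := repeat (repeat match goal with H : context[Num.max _ _] |- _ => revert H end; match goal with |- context[Num.max ?x ?y] => case: (leP x y) end); intros.

Lemma sum2 (V : comRingType) (N : nat) (G G' : 'I_N -> V) (K K1 : 'I_N) : K != K1 ->
  (forall j, j != K -> j != K1 -> G j = G' j) ->
  \sum_j G j = \sum_j G' j + (G K - G' K) + (G K1 - G' K1).
Proof.
move=> hK hG.
rewrite (bigD1 K) //= (bigD1 K1) //=; last by rewrite eq_sym.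
rewrite [in RHS](bigD1 K) //= [in RHS](bigD1 K1) //=; last by rewrite eq_sym.
rewrite (eq_bigr (fun j => G' j)); last by move=> j /andP[? ?]; apply: hG.
ring.
Qed.


Lemma bigmax_ge (T : realDomainType) (I : eqType) (r : seq I) (F : I -> T) x0 i :
  i \in r -> F i <= \big[Num.max/x0]_(j <- r) F j.
Proof.
elim: r => //= a r IH; rewrite inE big_cons => /orP[/eqP->|/IH h]; rewrite le_max ?lexx //.
by rewrite h orbT.
Qed.

Lemma upm_ge (T : realDomainType) n (A : 'M[T]_n) (s : 'S_n) :
  \sum_(i < n) A i (s i) <= upm A.
Proof. by rewrite /upm; apply: bigmax_ge; rewrite mem_index_enum. Qed.

Lemma upm_le (T : realDomainType) n (A : 'M[T]_n) M :
  (forall s : 'S_n, \sum_(i < n) A i (s i) <= M) -> upm A <= M.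
Proof.
move=> h; rewrite /upm; apply: (big_ind (fun x => x <= M)).
- by have := h 1%g; under eq_bigr do rewrite perm1.
- by move=> x y hx hy; rewrite ge_max hx hy.
- by move=> s _; apply: h.
Qed.

Lemma sum_perm (T : comRingType) n (G : 'I_n -> T) (p : 'S_n) :
  \sum_(i < n) G i = \sum_(k < n) G (p k).
Proof. by rewrite (reindex_inj (@perm_inj _ p)). Qed.

Section G.
Variables (R : realFieldType) (N : nat) (F : 'I_N -> int -> R) (c : int -> R) (ok : pred int).
Hypothesis Fconv : forall i u, F i u + F i u <= F i (u - 1) + F i (u + 1).
Hypothesis okr : forall x, ok x -> -1 <= x <= 1.
Hypothesis ok0 : ok 0.
Hypothesis cost2 : ok 1 -> ok (-1) -> c 0 + c 0 <= c 1 + c (-1).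

Definition Val (p : 'S_N) (s : nat -> int) := \sum_(k < N) F (p k) ((k : nat)%:Z + s k).
Definition cost (s : nat -> int) := \sum_(k < N) c (s k).
Definition mu (s : nat -> int) := \sum_(k < N) (k : nat)%:Z * (1 - s k).
Definition allowed (s : nat -> int) := forall k, (k < N)%N -> ok (s k).
Definition mono (s : nat -> int) := forall k, (k.+1 < N)%N -> s k <= s k.+1.

Lemma EX p q (x y : int) : y <= x <= y + 1 ->
  F p x + F q y <= Num.max (F p (x - 1) + F q (y + 1)) (F q (x - 1) + F p (y + 1)).
Proof.
case/andP=> h1 h2.
have [->|hne] := eqVneq x (y + 1).
  rewrite addrK; maxsplit; lra.
have hxy : x = y by lia.
subst x.
have cp := Fconv p y; have cq := Fconv q y.
maxsplit; lra.
Qed.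

Lemma mu_ge0 s : allowed s -> 0 <= mu s.
Proof.
move=> hs; rewrite /mu; apply: sumr_ge0 => k _.
have := okr (hs k (ltn_ord k)); case/andP=> _ h.
apply: mulr_ge0 => //; lia.
Qed.

Lemma KL M : (forall s p, allowed s -> mono s -> Val p s - cost s <= M) ->
  forall s p, allowed s -> Val p s - cost s <= M.
Proof.
move=> H.
suff: forall n s p, allowed s -> mu s < (n : nat)%:Z -> Val p s - cost s <= M.
  move=> hh s p hs; apply: (hh (`|mu s|%N).+1) => //.
  have := mu_ge0 hs; lia.
elim=> [|n IH] s p hs hmu; first by have := mu_ge0 hs; lia.
case: (boolP [forall k : 'I_N, (k.+1 < N)%N ==> (s k <= s k.+1)]) => hm.
  apply: H => // k hk.
  have hk' : (k < N)%N by apply: ltnW.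
  by move/forallP: hm => /(_ (Ordinal hk'))/implyP/(_ hk).
move: hm; rewrite negb_forall => /existsP[K].
case: K => k hk /=.
rewrite negb_imply -ltNge => /andP[hK1 hlt].
pose K := Ordinal hk.
pose K1 := Ordinal hK1.
have hKK1 : K != K1 by rewrite -val_eqE /= neq_ltn ltnSn.
pose s' := fun j : nat => if j == k then s k - 1 else if j == k.+1 then s k.+1 + 1 else s j.
have rk := okr (hs k hk).
have rk1 := okr (hs k.+1 hK1).
have hs' : allowed s'.
  move=> j hj; rewrite /s'.
  case: eqP => [_|_].
    have [e1|e1] : s k = 1 \/ s k = 0 by lia.
      by rewrite e1 subrr.
    have -> : s k - 1 = s k.+1 by lia.
    by apply: hs.
  case: eqP => [_|_]; last by apply: hs.
  have [e1|e1] : s k.+1 = -1 \/ s k.+1 = 0 by lia.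
    by rewrite e1 addNr.
  have -> : s k.+1 + 1 = s k by lia.
  by apply: hs.
have e' : forall j : 'I_N, j != K -> j != K1 -> s' j = s j.
  move=> j h1 h2; rewrite /s'.
  have -> : (nat_of_ord j == k) = false by apply/negbTE; move: h1; rewrite -val_eqE.
  by have -> : (nat_of_ord j == k.+1) = false by apply/negbTE; move: h2; rewrite -val_eqE.
have s'K : s' K = s k - 1 by rewrite /s' eqxx.
have s'K1 : s' K1 = s k.+1 + 1 by rewrite /s' /= eqn_leq ltnn /= eqxx.
have hmu' : mu s' < n%:Z.
  have := sum2 (G := fun j : 'I_N => (j : nat)%:Z * (1 - s' j)) (G' := fun j : 'I_N => (j : nat)%:Z * (1 - s j)) hKK1.
  rewrite -/(mu s') -/(mu s) => ->; last by move=> j h1 h2 /=; rewrite e'.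
  rewrite s'K s'K1 /=.
  have -> : (k.+1)%:Z = k%:Z + 1 by lia.
  move: hmu; nia.
have hcost : cost s' <= cost s.
  have := sum2 (G := fun j : 'I_N => c (s' j)) (G' := fun j : 'I_N => c (s j)) hKK1.
  rewrite -/(cost s') -/(cost s) => ->; last by move=> j h1 h2 /=; rewrite e'.
  rewrite s'K s'K1 /=.
  have [[e1 e2]|[[e1 e2]|[e1 e2]]] :
     (s k = 1 /\ s k.+1 = 0) \/ (s k = 0 /\ s k.+1 = -1) \/ (s k = 1 /\ s k.+1 = -1) by lia.
  - rewrite e1 e2 subrr add0r; lra.
  - rewrite e1 e2 sub0r addNr; lra.
  - rewrite e1 e2 subrr addNr.
    have := cost2 _ _.
    move=> h; have {}h := h (ltac:(rewrite -e1; apply: hs hk)) (ltac:(rewrite -e2; apply: hs hK1)).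
    lra.
have hex := EX (p K) (p K1) (x := k%:Z + s k) (y := k.+1%:Z + s k.+1) ltac:(apply/andP; split; lia).
pose p'' := (tperm K K1 * p)%g.
have V1 : Val p s' = Val p s + (F (p K) (k%:Z + s k - 1) - F (p K) (k%:Z + s k))
   + (F (p K1) (k.+1%:Z + s k.+1 + 1) - F (p K1) (k.+1%:Z + s k.+1)).
  rewrite /Val (sum2 (G' := fun j : 'I_N => F (p j) ((j : nat)%:Z + s j)) hKK1); last first.
    by move=> j h1 h2; rewrite e'.
  by rewrite s'K s'K1 !addrA.
have V2 : Val p'' s' = Val p s + (F (p K1) (k%:Z + s k - 1) - F (p K) (k%:Z + s k))
   + (F (p K) (k.+1%:Z + s k.+1 + 1) - F (p K1) (k.+1%:Z + s k.+1)).
  rewrite /Val (sum2 (G' := fun j : 'I_N => F (p j) ((j : nat)%:Z + s j)) hKK1); last first.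
    by move=> j h1 h2; rewrite e' // permM tpermD // eq_sym.
  by rewrite s'K s'K1 !permM tpermL tpermR !addrA.
have IH1 := IH s' p hs' hmu'.
have IH2 := IH s' p'' hs' hmu'.
move: hex; maxsplit; lra.
Qed.
Definition FM (s : nat -> int) : 'M[R]_N := \matrix_(i < N, j < N) F i ((j : nat)%:Z + s j).

Lemma Val_FM s p : Val p s <= upm (FM s).
Proof.
have := upm_ge (FM s) (p^-1)%g.
rewrite (sum_perm _ p) /Val.
by under eq_bigr do rewrite mxE permK.
Qed.

Lemma FM_le s M : (forall p, Val p s <= M) -> upm (FM s) <= M.
Proof.
move=> h; apply: upm_le => q.
rewrite (sum_perm _ (q^-1)%g).
under eq_bigr do rewrite mxE permKV.
exact: h.
Qed.

Lemma GE (G : 'M[R]_N) :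
  (forall i (j : 'I_N) x, ok x -> F i ((j : nat)%:Z + x) - c x <= G i j) ->
  forall s, allowed s -> upm (FM s) - cost s <= upm G.
Proof.
move=> hG s hs.
suff : upm (FM s) <= upm G + cost s by lra.
apply: FM_le => p.
suff : Val p s - cost s <= upm G by lra.
apply: le_trans (upm_ge G (p^-1)%g).
rewrite (sum_perm _ p) /Val /cost -sumrB.
apply: ler_sum => k _; rewrite permK; apply: hG; exact: hs.
Qed.

Lemma LE (G : 'M[R]_N) M :
  (forall i (j : 'I_N), exists x, ok x && (G i j <= F i ((j : nat)%:Z + x) - c x)) ->
  (forall s p, allowed s -> mono s -> Val p s - cost s <= M) ->
  upm G <= M.
Proof.
move=> hG hM; apply: upm_le => q.
rewrite (sum_perm _ (q^-1)%g).
under eq_bigr do rewrite permKV.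
set p := (q^-1)%g.
pose P k x := [forall k' : 'I_N, (nat_of_ord k' == k) ==> (ok x && (G (p k') k' <= F (p k') ((k' : nat)%:Z + x) - c x))].
have exP : forall k, exists x, P k x.
  move=> k; case: (ltnP k N) => hk.
    have [x hx] := hG (p (Ordinal hk)) (Ordinal hk).
    exists x; apply/forallP => k'; apply/implyP => /eqP hk'.
    by have -> : k' = Ordinal hk by apply: val_inj.
  exists 0; apply/forallP => k'; apply/implyP => /eqP hk'.
  by move: (ltn_ord k'); rewrite hk' ltnNge hk.
pose s k := xchoose (exP k).
have hsP : forall k : 'I_N, ok (s k) && (G (p k) k <= F (p k) ((k : nat)%:Z + s k) - c (s k)).
  by move=> k; have /forallP/(_ k)/implyP := xchooseP (exP k); apply.
have hs : allowed s.
  by move=> k hk; have /andP[] := hsP (Ordinal hk).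
apply: le_trans (KL hM p hs).
rewrite /Val /cost -sumrB; apply: ler_sum => k _.
by have /andP[] := hsP k.
Qed.

End G.


Lemma count_down (P : pred nat) n : (forall k, (k.+1 < n)%N -> P k.+1 -> P k) ->
  forall k, (k < n)%N -> P k = (k < count P (iota 0 n))%N.
Proof.
elim: n => [//|n IH] H k hk.
rewrite (_ : iota 0 n.+1 = iota 0 n ++ [:: n]); last by rewrite -addn1 iotaD.
rewrite count_cat /= addn0.
have H' : forall k, (k.+1 < n)%N -> P k.+1 -> P k.
  by move=> j hj; apply: H; apply: ltnW.
case hPn: (P n).
  have hallj : forall j, (j <= n)%N -> P j.
    have gen : forall t j, (j + t)%N = n -> P j.
      elim=> [|t IHt] j hjt; first by move: hjt; rewrite addn0 => ->.
      apply: H; first by rewrite ltnS; lia.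
      by apply: IHt; lia.
    move=> j hj; apply: (gen (n - j)%N); lia.
  have -> : count P (iota 0 n) = n.
    have hall : all P (iota 0 n).
      by apply/allP => j; rewrite mem_iota add0n => /andP[_ hj]; apply: hallj; apply: ltnW.
    by move: hall; rewrite all_count size_iota => /eqP.
  by rewrite addn1 hk hallj // -ltnS.
rewrite addn0.
case: (ltnP k n) => hkn; first by apply: IH.
have -> : k = n by apply/eqP; rewrite eqn_leq hkn -ltnS hk.
rewrite hPn; apply/esym/negbTE; rewrite -leqNgt.
by have := count_size P (iota 0 n); rewrite size_iota.
Qed.

Definition sAB (A B : nat) (k : nat) : int :=
  if (k < A)%N then -1 else if (k < B)%N then 0 else 1.

Section Mono.
Variables (N : nat) (s : nat -> int).
Hypothesis srange : forall k, (k < N)%N -> -1 <= s k <= 1.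
Hypothesis smono : forall k, (k.+1 < N)%N -> s k <= s k.+1.

Definition cA := count (fun k => s k == -1) (iota 0 N).
Definition cB := count (fun k => s k <= 0) (iota 0 N).

Lemma cA_char k : (k < N)%N -> (s k == -1) = (k < cA)%N.
Proof.
apply: count_down => j hj /eqP h.
have := smono hj; have := srange (ltnW hj); rewrite h; lia.
Qed.
Lemma cB_char k : (k < N)%N -> (s k <= 0) = (k < cB)%N.
Proof.
apply: count_down => j hj h.
have := smono hj; lia.
Qed.
Lemma cAB : (cA <= cB)%N.
Proof. by apply: sub_count => k /= /eqP ->. Qed.
Lemma cBN : (cB <= N)%N.
Proof. by have := count_size (fun k => s k <= 0) (iota 0 N); rewrite size_iota. Qed.
Lemma s_sAB k : (k < N)%N -> s k = sAB cA cB k.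
Proof.
move=> hk; rewrite /sAB -cA_char // -cB_char //.
have := srange hk; case: eqP => [//|h1]; case: ifP => h2; lia.
Qed.
End Mono.

Lemma cost_sAB (R : realFieldType) N (c : int -> R) A B : (A <= B <= N)%N ->
  \sum_(k < N) c (sAB A B k) = c (-1) *+ A + c 0 *+ (B - A) + c 1 *+ (N - B).
Proof.
case/andP=> hAB hBN.
rewrite -(big_mkord xpredT (fun k => c (sAB A B k))).
rewrite (@big_cat_nat _ _ _ A 0 N) ?(leq_trans hAB hBN) //=.
rewrite (@big_cat_nat _ _ _ B A N) //=.
rewrite (eq_big_nat _ _ (F2 := fun=> c (-1))); last by move=> i /andP[_ h]; rewrite /sAB h.
rewrite (eq_big_nat _ _ (F2 := fun=> c 0) (m := A)); last first.
  by move=> i /andP[h1 h2]; rewrite /sAB ltnNge h1 /= h2.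
rewrite (eq_big_nat _ _ (F2 := fun=> c 1) (m := B)); last first.
  by move=> i /andP[h1 h2]; rewrite /sAB ltnNge (leq_trans hAB h1) /= ltnNge h1.
by rewrite !sumr_const_nat subn0 addrA.
Qed.

Lemma cols_nth N A B j : (A <= B <= N)%N -> (j < N)%N ->
  nth 0 (cols N (A%:Z - 1) B%:Z) j = j%:Z + sAB A B j.
Proof.
case/andP=> hAB hBN hj.
rewrite /cols filter_map.
have hiota : iota 0 N.+2 = iota 0 A ++ A :: iota A.+1 (B - A) ++ B.+1 :: iota B.+2 (N - B).
  have -> : N.+2 = (A + ((B - A).+1 + (N - B).+1))%N by lia.
  rewrite iotaD iotaD add0n /=.
  by rewrite (_ : (A + (B - A).+1)%N = B.+1) //; lia.
have hf : [seq i <- iota 0 N.+2 | preim (fun k : nat => k%:Z - 1) (fun x => (x != A%:Z - 1) && (x != B%:Z)) i]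
   = iota 0 A ++ iota A.+1 (B - A) ++ iota B.+2 (N - B).
  rewrite (eq_filter (a2 := fun k : nat => (k != A) && (k != B.+1))); last first.
    move=> k /=; apply/andP/andP => [[/eqP h1 /eqP h2]|[/eqP h1 /eqP h2]]; split; apply/eqP; lia.
  rewrite hiota !filter_cat /= (eqxx A) /= filter_cat /= (eqxx B.+1) andbF /=.
  rewrite (all_filterP _) ?(all_filterP (s := iota A.+1 _) _) ?(all_filterP (s := iota B.+2 _) _) //.
  - apply/allP => x; rewrite mem_iota => /andP[h1 h2] /=; apply/andP; split; apply/eqP; lia.
  - apply/allP => x; rewrite mem_iota => /andP[h1 h2] /=; apply/andP; split; apply/eqP; lia.
  - apply/allP => x; rewrite mem_iota => /andP[h1 h2] /=; apply/andP; split; apply/eqP; lia.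
rewrite hf (nth_map 0%N); last by rewrite !size_cat !size_iota; lia.
rewrite /sAB; case: ifP => h1.
  by rewrite nth_cat size_iota h1 nth_iota //; lia.
rewrite nth_cat size_iota h1 nth_cat size_iota.
case: ifP => h2.
  rewrite nth_iota ?h2 //.
  have -> : (j < B)%N by lia.
  lia.
rewrite nth_iota; last by lia.
have -> : (j < B)%N = false by lia.
lia.
Qed.


Lemma maxto_le (R : realDomainType) n (f : nat -> R) X :
  maxto n f <= X <-> (forall j, (j <= n)%N -> f j <= X).
Proof.
split.
  move=> h j hj.
  have H : f j <= maxto n f.
    have hm : j \in index_iota 0 n.+1 by rewrite mem_index_iota; lia.
    exact: (@bigmax_ge R nat (index_iota 0 n.+1) f (f 0%N) j hm).
  exact: le_trans H h.
move=> h; rewrite /maxto big_seq; apply: (big_ind (fun x => x <= X)).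
- by apply: h.
- by move=> x y hx hy; rewrite ge_max hx hy.
- by move=> i; rewrite mem_index_iota => /andP[_ hi]; apply: h.
Qed.

Lemma eq_bounds (R : realDomainType) (x y : R) : (forall X, x <= X <-> y <= X) -> x = y.
Proof.
move=> h; apply/le_anti/andP; split; [apply/(proj2 (h y)) | apply/(proj1 (h x))]; exact: lexx.
Qed.

Lemma max_le (R : realDomainType) (a b X : R) : Num.max a b <= X <-> a <= X /\ b <= X.
Proof. by rewrite ge_max; split => [/andP[]|[-> ->]]. Qed.

Section Combi.
Variables (R : realDomainType) (N : nat) (T : int -> int -> R).

Lemma Tc a b a' b' X : a = a' -> b = b' -> T a' b' <= X -> T a b <= X.
Proof. by move=> -> ->. Qed.

Definition rng k1 k2 X := forall i, (k1 + k2 - N <= i)%N -> (i <= minn k1 k2)%N ->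
   T (k2%:Z - i%:Z - 1) (N%:Z - k1%:Z + i%:Z) <= X.

Lemma c1 k1 k2 X : (k1 <= N)%N -> (k2 <= k1)%N -> (k2 <= N - k1)%N ->
  maxto k2 (fun i => T (k2%:Z - i%:Z - 1) (N%:Z - k1%:Z + i%:Z)) <= X <-> rng k1 k2 X.
Proof.
move=> h1 h2 h3; rewrite maxto_le; split=> H i hi.
  move=> hi2; apply: H; lia.
apply: H; lia.
Qed.

Lemma c2 k1 k2 X : (k1 <= N)%N -> (k2 <= N - k1)%N -> (k1 <= k2)%N ->
  maxto k1 (fun i => T (k2%:Z - i%:Z - 1) (N%:Z - k1%:Z + i%:Z)) <= X <-> rng k1 k2 X.
Proof.
move=> h1 h2 h3; rewrite maxto_le; split=> H i hi.
  move=> hi2; apply: H; lia.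
apply: H; lia.
Qed.

Lemma c3 k1 k2 X : (k1 <= N)%N -> (k2 <= k1)%N -> (N - k1 <= k2)%N ->
  maxto (N - k1) (fun i => T (i%:Z - 1) (N%:Z - k1%:Z + k2%:Z - i%:Z)) <= X <-> rng k1 k2 X.
Proof.
move=> h1 h2 h3; rewrite maxto_le; split=> H i hi.
  move=> hi2; apply: (Tc _ _ (H (k2 - i)%N _)); lia.
apply: (Tc _ _ (H (k2 - i)%N _ _)); lia.
Qed.

Lemma c4 k1 k2 X : (k2 <= N)%N -> (N - k1 <= k2)%N -> (k1 <= k2)%N ->
  maxto (N - k2) (fun i => T (N%:Z - k1%:Z - i%:Z - 1) (k2%:Z + i%:Z)) <= X <-> rng k1 k2 X.
Proof.
move=> h1 h2 h3; rewrite maxto_le; split=> H i hi.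
  move=> hi2; apply: (Tc _ _ (H (i - (k1 + k2 - N))%N _)); lia.
apply: (Tc _ _ (H (k1 + k2 - N + i)%N _ _)); lia.
Qed.

Lemma r1 k1 k2 X : (1 <= k1 <= N)%N -> (1 <= k2 <= N)%N -> (k1 + k2 <= N)%N ->
  rng k1 k2 X <-> rng k1.-1 k2.-1 X /\ T (k2%:Z - 1) (N%:Z - k1%:Z) <= X.
Proof.
move=> h1 h2 h3; split.
  move=> H; split.
    move=> i hi hi2; apply: (Tc _ _ (H i.+1 _ _)); lia.
  apply: (Tc _ _ (H 0%N _ _)); lia.
case=> H H0 i hi hi2.
case: i hi hi2 => [|i] hi hi2.
  apply: (Tc _ _ H0); lia.
apply: (Tc _ _ (H i _ _)); lia.
Qed.

Lemma r2 k1 k2 X : (1 <= k1 <= N)%N -> (1 <= k2 <= N)%N -> (N.+2 <= k1 + k2)%N ->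
  rng k1.-1 k2.-1 X <-> rng k1 k2 X /\ T (N%:Z - k1%:Z) (k2%:Z - 1) <= X.
Proof.
move=> h1 h2 h3; split.
  move=> H; split.
    move=> i hi hi2; apply: (Tc _ _ (H i.-1 _ _)); lia.
  apply: (Tc _ _ (H (k1 + k2 - N - 2)%N _ _)); lia.
case=> H H0 i hi hi2.
case: (ltnP (k1 + k2 - N - 2)%N i) => hh.
  apply: (Tc _ _ (H i.+1 _ _)); lia.
apply: (Tc _ _ H0); lia.
Qed.

Lemma r3 k1 k2 X : (1 <= k1 <= N)%N -> (1 <= k2 <= N)%N -> (k1 + k2 = N.+1)%N ->
  rng k1 k2 X <-> rng k1.-1 k2.-1 X.
Proof.
move=> h1 h2 h3; split.
  move=> H i hi hi2; apply: (Tc _ _ (H i.+1 _ _)); lia.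
move=> H i hi hi2; apply: (Tc _ _ (H i.-1 _ _)); lia.
Qed.
End Combi.




Section P.
Variables (R : realFieldType) (N : nat) (d e : R) (r c c' : 'I_N -> R).

Lemma eta_l1 i l m n : Defs.eta d e r c i (l+1) m n = Defs.eta d e r c i l m n + Num.max 0 (r i - d).
Proof. rewrite /Defs.eta mulrzDr mulr1z. ring. Qed.
Lemma eta'_l1 i l m n : Defs.eta' d e r c' i (l+1) m n = Defs.eta' d e r c' i l m n + Num.max 0 (- r i - d).
Proof. rewrite /Defs.eta' mulrzDr mulr1z. ring. Qed.
Lemma eta_m1 i l m n : Defs.eta d e r c i l (m-1) n = Defs.eta d e r c i l m n + Num.max 0 (- r i - e).
Proof. rewrite /Defs.eta mulrzBr mulr1z. ring. Qed.
Lemma eta'_m1 i l m n : Defs.eta' d e r c' i l (m-1) n = Defs.eta' d e r c' i l m n + Num.max 0 (r i - e).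
Proof. rewrite /Defs.eta' mulrzBr mulr1z. ring. Qed.
Lemma eta_n1 i l m n : Defs.eta d e r c i l m (n+1) = Defs.eta d e r c i l m n + r i.
Proof. rewrite /Defs.eta mulrzDr mulr1z. ring. Qed.
Lemma eta'_n1 i l m n : Defs.eta' d e r c' i l m (n+1) = Defs.eta' d e r c' i l m n - r i.
Proof. rewrite /Defs.eta' mulrzDr mulr1z. ring. Qed.

Lemma phi_l1 i l m n : phi d e r c c' i (l+1) m n =
  Num.max (phi d e r c c' i l m n) (phi d e r c c' i l m (n+1) - d).
Proof.
rewrite /phi eta_l1 eta'_l1 eta_n1 eta'_n1.
move: (Defs.eta _ _ _ _ _ _ _ _) (Defs.eta' _ _ _ _ _ _ _ _) => E E'.
maxsplit; lra.
Qed.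
End P.




Lemma maxto_ge (R : realDomainType) n (f : nat -> R) j : (j <= n)%N -> f j <= maxto n f.
Proof. by move=> hj; move: (lexx (maxto n f)); rewrite maxto_le => /(_ j hj). Qed.

Section PH.
Variables (R : realFieldType) (N : nat) (d e : R) (r cc cc' : 'I_N -> R) (l m n : int).

Lemma eta_nm1 i l' m' n' : Defs.eta d e r cc i l' m' (n' - 1) = Defs.eta d e r cc i l' m' n' - r i.
Proof. have := eta_n1 d e r cc i l' m' (n' - 1); rewrite subrK => ->; ring. Qed.
Lemma eta'_nm1 i l' m' n' : Defs.eta' d e r cc' i l' m' (n' - 1) = Defs.eta' d e r cc' i l' m' n' + r i.
Proof. have := eta'_n1 d e r cc' i l' m' (n' - 1); rewrite subrK => ->; ring. Qed.

Lemma phi_m1 i l' m' n' : phi d e r cc cc' i l' (m' - 1) n' =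
  Num.max (phi d e r cc cc' i l' m' n') (phi d e r cc cc' i l' m' (n' - 1) - e).
Proof.
rewrite /phi eta_m1 eta'_m1 eta_nm1 eta'_nm1.
move: (Defs.eta _ _ _ _ _ _ _ _) (Defs.eta' _ _ _ _ _ _ _ _) => E E'.
maxsplit; lra.
Qed.

Lemma phi_conv i l' m' x : phi d e r cc cc' i l' m' x + phi d e r cc cc' i l' m' x <=
  phi d e r cc cc' i l' m' (x - 1) + phi d e r cc cc' i l' m' (x + 1).
Proof.
rewrite /phi eta_nm1 eta'_nm1 eta_n1 eta'_n1.
move: (Defs.eta _ _ _ _ _ _ _ _) (Defs.eta' _ _ _ _ _ _ _ _) => E E'.
maxsplit; lra.
Qed.

Definition Fp i (u : int) := phi d e r cc cc' i l m (n + u).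

Lemma Fp_conv i u : Fp i u + Fp i u <= Fp i (u - 1) + Fp i (u + 1).
Proof. by rewrite /Fp !addrA phi_conv. Qed.

Lemma TC A B : (A <= B <= N)%N ->
  tauc d e r cc cc' l m n (A%:Z - 1) B%:Z = upm (FM Fp (sAB A B)).
Proof.
move=> h; rewrite /tauc; congr upm; apply/matrixP => i j.
by rewrite !mxE cols_nth.
Qed.

Lemma tauc_congr a b a' b' : a = a' -> b = b' ->
  tauc d e r cc cc' l m n a b = tauc d e r cc cc' l m n a' b'.
Proof. by move=> -> ->. Qed.

Definition costf (cf : int -> R) A B := cf (-1) *+ A + cf 0 *+ (B - A) + cf 1 *+ (N - B).

Section OK.
Variables (cf : int -> R) (ok : pred int).
Hypothesis okr : forall x, ok x -> -1 <= x <= 1.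

Lemma MONO s p : allowed N ok s -> mono N s ->
  exists A B, [/\ (A <= B <= N)%N, (0 < A)%N -> ok (-1), (B < N)%N -> ok 1 &
    Val Fp p s - cost N cf s <= tauc d e r cc cc' l m n (A%:Z - 1) B%:Z - costf cf A B].
Proof.
move=> hs hm.
have sr : forall k, (k < N)%N -> -1 <= s k <= 1 by move=> k hk; apply: okr; apply: hs.
exists (cA N s), (cB N s).
have hAB : (cA N s <= cB N s)%N by apply: cAB.
have hBN : (cB N s <= N)%N by apply: cBN.
have hAB' : (cA N s <= cB N s <= N)%N by rewrite hAB hBN.
split => //.
- move=> hA.
  have h0 : (0 < N)%N by lia.
  have := cA_char sr hm h0; rewrite hA => /eqP <-; exact: hs.
- move=> hB.
  have := cB_char hm hB; rewrite ltnn => h.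
  have e1 : s (cB N s) = 1 by move: h; have := sr _ hB; lia.
  by rewrite -e1; apply: hs.
rewrite TC //.
have -> : FM Fp (sAB (cA N s) (cB N s)) = FM Fp s.
  by apply/matrixP => i j; rewrite !mxE (s_sAB sr hm).
have -> : cost N cf s = costf cf (cA N s) (cB N s).
  rewrite /costf -cost_sAB //; apply: eq_bigr => k _; by rewrite (s_sAB sr hm).
have := Val_FM Fp s p; lra.
Qed.

Lemma TCGE (G : 'M[R]_N) :
  (forall i (j : 'I_N) x, ok x -> Fp i ((j : nat)%:Z + x) - cf x <= G i j) ->
  forall A B, (A <= B <= N)%N -> ((0 < A)%N -> ok (-1)) -> ((A < B)%N -> ok 0) -> ((B < N)%N -> ok 1) ->
  tauc d e r cc cc' l m n (A%:Z - 1) B%:Z - costf cf A B <= upm G.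
Proof.
move=> hG A B hAB h1 h2 h3.
have hs : allowed N ok (sAB A B).
  move=> k hk; rewrite /sAB.
  case: ifP => k1; first by apply: h1; lia.
  case: ifP => k2; first by apply: h2; lia.
  by apply: h3; lia.
have := GE hG hs.
by rewrite -TC // /cost cost_sAB.
Qed.
End OK.

End PH.

Section Case1.
Variables (R : realFieldType) (N : nat) (d e : R) (r cc cc' : 'I_N -> R) (l m n : int).
Hypothesis Hd : 0 <= d.
Let F := Fp d e r cc cc' l m n.
Let tc := tauc d e r cc cc' l m n.

Lemma case1 : tau d e r cc cc' (l + 1) m n =
  maxto N (fun k1 => tc (-1) (N%:Z - k1%:Z) - k1%:R * d).
Proof.
pose ok1 := fun x : int => (x == 0) || (x == 1).
pose cf := fun x : int => if x == 1 then d else 0.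
have okr : forall x, ok1 x -> -1 <= x <= 1 by move=> x /orP[/eqP->|/eqP->].
rewrite /tau.
set Gm := \matrix_(i, j) _.
have hGf : forall i j, Gm i j = Num.max (F i j) (F i (j%:Z + 1) - d).
  by move=> i j; rewrite mxE phi_l1 /F /Fp addrA.
apply: le_anti; apply/andP; split.
- apply: (LE (F := F) (c := cf) (ok := ok1)).
  + exact: Fp_conv.
  + exact: okr.
  + by [].
  + by [].
  + move=> i j; rewrite hGf; case: (leP (F i j) (F i (j%:Z + 1) - d)) => h.
      by exists 1; rewrite /ok1 /cf /=.
    by exists 0; rewrite /ok1 /cf /= addr0 subr0.
  + move=> s p hs hm.
    have [A [B [hAB h1 h2 hV]]] := MONO d e r cc cc' l m n cf okr p hs hm.
    have A0 : A = 0%N by case: A h1 {hAB hV} => // A /(_ isT).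
    subst A.
    apply: (le_trans hV).
    have hB : (N - B <= N)%N by lia.
    apply: le_trans (maxto_ge _ hB).
    rewrite /costf /cf /= !mul0rn !add0r mulr_natl.
    rewrite (tauc_congr d e r cc cc' l m n (a' := -1) (b' := N%:Z - (N - B)%N%:Z)) //; lia.
- rewrite maxto_le => k1 hk1.
  have G2 : forall i (j : 'I_N) x, ok1 x -> F i ((j : nat)%:Z + x) - cf x <= Gm i j.
    move=> i j x /orP[/eqP->|/eqP->]; rewrite hGf /cf /=; maxsplit; rewrite ?addr0 ?subr0; lra.
  have := TCGE (cf := cf) (l := l) (m := m) (n := n) G2 (A := 0) (B := N - k1) ltac:(lia) ltac:(by rewrite ?ltnn) ltac:(by rewrite ?ltnn) ltac:(by rewrite ?ltnn).
  rewrite /costf /cf /= !mul0rn !add0r mulr_natl.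
  rewrite (_ : (N - (N - k1))%N = k1); last by lia.
  move=> h; rewrite /tc (tauc_congr d e r cc cc' l m n (a' := -1) (b' := (N - k1)%N%:Z)) //; lia.
Qed.
End Case1.

Section Cases.
Variables (R : realFieldType) (N : nat) (d e : R) (r cc cc' : 'I_N -> R) (l m n : int).
Hypothesis Hd : 0 <= d.
Hypothesis He : 0 <= e.
Let F := Fp d e r cc cc' l m n.
Let tc := tauc d e r cc cc' l m n.

Lemma case2 : tau d e r cc cc' l (m - 1) n =
  maxto N (fun k2 => tc (k2%:Z - 1) N%:Z - k2%:R * e).
Proof.
pose ok1 := fun x : int => (x == -1) || (x == 0).
pose cf := fun x : int => if x == -1 then e else 0.
have okr : forall x, ok1 x -> -1 <= x <= 1 by move=> x /orP[/eqP->|/eqP->].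
rewrite /tau.
set Gm := \matrix_(i, j) _.
have hGf : forall i j, Gm i j = Num.max (F i j) (F i (j%:Z - 1) - e).
  by move=> i j; rewrite mxE phi_m1 /F /Fp addrA.
apply: le_anti; apply/andP; split.
- apply: (LE (F := F) (c := cf) (ok := ok1)).
  + exact: Fp_conv.
  + exact: okr.
  + by [].
  + by [].
  + move=> i j; rewrite hGf; case: (leP (F i j) (F i (j%:Z - 1) - e)) => h.
      by exists (-1); rewrite /ok1 /cf /=.
    by exists 0; rewrite /ok1 /cf /= addr0 subr0.
  + move=> s p hs hm.
    have [A [B [hAB h1 h2 hV]]] := MONO d e r cc cc' l m n cf okr p hs hm.
    have BN : B = N by case: (ltnP B N) => hB; [have := h2 hB | lia].
    subst B.
    apply: (le_trans hV).
    have hA : (A <= N)%N by lia.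
    apply: le_trans (maxto_ge _ hA).
    by rewrite /costf /cf /= !mul0rn !addr0 mulr_natl.
- rewrite maxto_le => k2 hk2.
  have G2 : forall i (j : 'I_N) x, ok1 x -> F i ((j : nat)%:Z + x) - cf x <= Gm i j.
    move=> i j x /orP[/eqP->|/eqP->]; rewrite hGf /cf /=; maxsplit; rewrite ?addr0 ?subr0; lra.
  have := TCGE (cf := cf) (l := l) (m := m) (n := n) G2 (A := k2) (B := N) ltac:(lia) ltac:(by rewrite ?ltnn) ltac:(by rewrite ?ltnn) ltac:(by rewrite ?ltnn).
  by rewrite /costf /cf /= !mul0rn !addr0 mulr_natl.
Qed.

Lemma case3 : tau d e r cc cc' (l + 1) m (n - 1) =
  maxto N (fun k1 => tc (N%:Z - k1%:Z - 1) N%:Z - k1%:R * d).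
Proof.
pose ok1 := fun x : int => (x == -1) || (x == 0).
pose cf := fun x : int => if x == 0 then d else 0.
have okr : forall x, ok1 x -> -1 <= x <= 1 by move=> x /orP[/eqP->|/eqP->].
rewrite /tau.
set Gm := \matrix_(i, j) _.
have hGf : forall i j, Gm i j = Num.max (F i (j%:Z - 1)) (F i j - d).
  move=> i j; rewrite mxE phi_l1 /F /Fp.
  have -> : n - 1 + j%:Z = n + (j%:Z - 1) by ring.
  by have -> : n + (j%:Z - 1) + 1 = n + j%:Z by ring.
apply: le_anti; apply/andP; split.
- apply: (LE (F := F) (c := cf) (ok := ok1)).
  + exact: Fp_conv.
  + exact: okr.
  + by [].
  + by [].
  + move=> i j; rewrite hGf; case: (leP (F i (j%:Z - 1)) (F i j - d)) => h.
      by exists 0; rewrite /ok1 /cf /= addr0.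
    by exists (-1); rewrite /ok1 /cf /= subr0.
  + move=> s p hs hm.
    have [A [B [hAB h1 h2 hV]]] := MONO d e r cc cc' l m n cf okr p hs hm.
    have BN : B = N by case: (ltnP B N) => hB; [have := h2 hB | lia].
    subst B.
    apply: (le_trans hV).
    have hA : (N - A <= N)%N by lia.
    apply: le_trans (maxto_ge _ hA).
    rewrite /costf /cf /= !mul0rn add0r addr0 mulr_natl.
    rewrite /tc (tauc_congr d e r cc cc' l m n (a' := A%:Z - 1) (b' := N%:Z)) //; lia.
- rewrite maxto_le => k1 hk1.
  have G2 : forall i (j : 'I_N) x, ok1 x -> F i ((j : nat)%:Z + x) - cf x <= Gm i j.
    move=> i j x /orP[/eqP->|/eqP->]; rewrite hGf /cf /=; maxsplit; rewrite ?addr0 ?subr0; lra.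
  have := TCGE (cf := cf) (l := l) (m := m) (n := n) G2 (A := (N - k1)%N) (B := N) ltac:(lia) ltac:(by rewrite ?ltnn) ltac:(by rewrite ?ltnn) ltac:(by rewrite ?ltnn).
  rewrite /costf /cf /= !mul0rn add0r addr0 mulr_natl.
  rewrite (_ : (N - (N - k1))%N = k1); last by lia.
  move=> h; rewrite /tc (tauc_congr d e r cc cc' l m n (a' := (N - k1)%N%:Z - 1) (b' := N%:Z)) //; lia.
Qed.

Lemma case4 : tau d e r cc cc' l (m - 1) (n + 1) =
  maxto N (fun k2 => tc (-1) k2%:Z - k2%:R * e).
Proof.
pose ok1 := fun x : int => (x == 0) || (x == 1).
pose cf := fun x : int => if x == 0 then e else 0.
have okr : forall x, ok1 x -> -1 <= x <= 1 by move=> x /orP[/eqP->|/eqP->].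
rewrite /tau.
set Gm := \matrix_(i, j) _.
have hGf : forall i j, Gm i j = Num.max (F i (j%:Z + 1)) (F i j - e).
  move=> i j; rewrite mxE phi_m1 /F /Fp.
  have -> : n + 1 + j%:Z = n + (j%:Z + 1) by ring.
  by have -> : n + (j%:Z + 1) - 1 = n + j%:Z by ring.
apply: le_anti; apply/andP; split.
- apply: (LE (F := F) (c := cf) (ok := ok1)).
  + exact: Fp_conv.
  + exact: okr.
  + by [].
  + by [].
  + move=> i j; rewrite hGf; case: (leP (F i (j%:Z + 1)) (F i j - e)) => h.
      by exists 0; rewrite /ok1 /cf /= addr0.
    by exists 1; rewrite /ok1 /cf /= subr0.
  + move=> s p hs hm.
    have [A [B [hAB h1 h2 hV]]] := MONO d e r cc cc' l m n cf okr p hs hm.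
    have A0 : A = 0%N by case: A h1 {hAB hV} => // A /(_ isT).
    subst A.
    apply: (le_trans hV).
    have hB : (B <= N)%N by lia.
    apply: le_trans (maxto_ge _ hB).
    rewrite /costf /cf /= !mul0rn add0r addr0 subn0 mulr_natl /tc.
    by rewrite add0r.
- rewrite maxto_le => k2 hk2.
  have G2 : forall i (j : 'I_N) x, ok1 x -> F i ((j : nat)%:Z + x) - cf x <= Gm i j.
    move=> i j x /orP[/eqP->|/eqP->]; rewrite hGf /cf /=; maxsplit; rewrite ?addr0 ?subr0; lra.
  have := TCGE (cf := cf) (l := l) (m := m) (n := n) G2 (A := 0) (B := k2) ltac:(lia) ltac:(by rewrite ?ltnn) ltac:(by rewrite ?ltnn) ltac:(by rewrite ?ltnn).
  rewrite /costf /cf /= !mul0rn add0r addr0 subn0 mulr_natl /tc => h.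
  by rewrite add0r in h.
Qed.

Lemma case5 : tau d e r cc cc' l m n = tc (-1) N%:Z.
Proof.
rewrite /tc (tauc_congr d e r cc cc' l m n (a' := 0%N%:Z - 1) (b' := N%:Z)) // TC; last by rewrite leq0n leqnn.
rewrite /tau; congr upm; apply/matrixP => i j; rewrite !mxE /Fp /sAB.
by rewrite ltn0 ltn_ord /= addr0.
Qed.
End Cases.

Section Case6.
Variables (R : realFieldType) (N : nat) (d e : R) (r cc cc' : 'I_N -> R) (l m n : int).
Hypothesis Hd : 0 <= d.
Hypothesis He : 0 <= e.
Local Notation F := (Fp d e r cc cc' l m n).
Local Notation tc := (tauc d e r cc cc' l m n).
Local Notation Ps := (Psi d e r cc cc' l m n).

Lemma PsChar k1 k2 X : (k1 <= N)%N -> (k2 <= N)%N -> Ps k1 k2 <= X <-> rng N tc k1 k2 X.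
Proof.
move=> h1 h2; rewrite /Psi /=.
case: ifP => C1.
  by apply: c1; move: C1 => /andP[]; lia.
case: ifP => C2.
  by apply: c2; move: C2 => /andP[]; lia.
case: ifP => C3.
  by apply: c3; move: C3 => /andP[]; lia.
apply: c4; move: C1 C2 C3; lia.
Qed.

Lemma psi1 k1 k2 : (k1 <= N)%N -> (k2 <= N)%N -> (k2 <= k1)%N -> (k2 <= N - k1)%N ->
  Ps k1 k2 = maxto k2 (fun i => tc (k2%:Z - i%:Z - 1) (N%:Z - k1%:Z + i%:Z)).
Proof.
move=> h1 h2 h3 h4; apply: eq_bounds => X.
apply: (iff_trans (PsChar X h1 h2)); apply: iff_sym; exact: c1.
Qed.
Lemma psi2 k1 k2 : (k1 <= N)%N -> (k2 <= N)%N -> (k2 <= N - k1)%N -> (k1 <= k2)%N ->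
  Ps k1 k2 = maxto k1 (fun i => tc (k2%:Z - i%:Z - 1) (N%:Z - k1%:Z + i%:Z)).
Proof.
move=> h1 h2 h3 h4; apply: eq_bounds => X.
apply: (iff_trans (PsChar X h1 h2)); apply: iff_sym; exact: c2.
Qed.
Lemma psi3 k1 k2 : (k1 <= N)%N -> (k2 <= N)%N -> (k2 <= k1)%N -> (N - k1 <= k2)%N ->
  Ps k1 k2 = maxto (N - k1) (fun i => tc (i%:Z - 1) (N%:Z - k1%:Z + k2%:Z - i%:Z)).
Proof.
move=> h1 h2 h3 h4; apply: eq_bounds => X.
apply: (iff_trans (PsChar X h1 h2)); apply: iff_sym; exact: c3.
Qed.
Lemma psi4 k1 k2 : (k1 <= N)%N -> (k2 <= N)%N -> (N - k1 <= k2)%N -> (k1 <= k2)%N ->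
  Ps k1 k2 = maxto (N - k2) (fun i => tc (N%:Z - k1%:Z - i%:Z - 1) (k2%:Z + i%:Z)).
Proof.
move=> h1 h2 h3 h4; apply: eq_bounds => X.
apply: (iff_trans (PsChar X h1 h2)); apply: iff_sym; exact: c4.
Qed.

Lemma psr1 k1 k2 : (1 <= k1 <= N)%N -> (1 <= k2 <= N)%N -> k2%:Z - 1 < N%:Z - k1%:Z ->
  Ps k1 k2 = Num.max (Ps k1.-1 k2.-1) (tc (k2%:Z - 1) (N%:Z - k1%:Z)).
Proof.
move=> h1 h2 h3.
have a1 : (k1 <= N)%N by lia. have a2 : (k2 <= N)%N by lia.
have b1 : (k1.-1 <= N)%N by lia. have b2 : (k2.-1 <= N)%N by lia.
have hs : (k1 + k2 <= N)%N by lia.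
apply: eq_bounds => X; split.
  move/(PsChar X a1 a2)/(r1 _ _ h1 h2 hs) => [H1 H2]; apply/max_le; split => //.
  exact/(PsChar X b1 b2).
move/max_le => [/(PsChar X b1 b2) H1 H2]; apply/(PsChar X a1 a2)/(r1 _ _ h1 h2 hs); by split.
Qed.

Lemma psr2 k1 k2 : (1 <= k1 <= N)%N -> (1 <= k2 <= N)%N -> k2%:Z - 1 > N%:Z - k1%:Z ->
  Ps k1.-1 k2.-1 = Num.max (Ps k1 k2) (tc (N%:Z - k1%:Z) (k2%:Z - 1)).
Proof.
move=> h1 h2 h3.
have a1 : (k1 <= N)%N by lia. have a2 : (k2 <= N)%N by lia.
have b1 : (k1.-1 <= N)%N by lia. have b2 : (k2.-1 <= N)%N by lia.
have hs : (N.+2 <= k1 + k2)%N by lia.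
apply: eq_bounds => X; split.
  move/(PsChar X b1 b2)/(r2 _ _ h1 h2 hs) => [H1 H2]; apply/max_le; split => //.
  exact/(PsChar X a1 a2).
move/max_le => [/(PsChar X a1 a2) H1 H2]; apply/(PsChar X b1 b2)/(r2 _ _ h1 h2 hs); by split.
Qed.

Lemma psr3 k1 k2 : (1 <= k1 <= N)%N -> (1 <= k2 <= N)%N -> k2%:Z - 1 = N%:Z - k1%:Z ->
  Ps k1 k2 = Ps k1.-1 k2.-1.
Proof.
move=> h1 h2 h3.
have a1 : (k1 <= N)%N by lia. have a2 : (k2 <= N)%N by lia.
have b1 : (k1.-1 <= N)%N by lia. have b2 : (k2.-1 <= N)%N by lia.
have hs : (k1 + k2 = N.+1)%N by lia.
apply: eq_bounds => X; split.
  by move/(PsChar X a1 a2)/(r3 _ _ h1 h2 hs)/(PsChar X b1 b2).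
by move/(PsChar X b1 b2)/(r3 _ _ h1 h2 hs)/(PsChar X a1 a2).
Qed.

Lemma case6 : tau d e r cc cc' (l + 1) (m - 1) n =
  maxto N (fun k1 => maxto N (fun k2 => Ps k1 k2 - k1%:R * d - k2%:R * e)).
Proof.
pose ok1 := fun x : int => [|| x == -1, x == 0 | x == 1].
pose cf := fun x : int => if x == 1 then d else if x == -1 then e else 0.
have okr : forall x, ok1 x -> -1 <= x <= 1 by move=> x /or3P[/eqP->|/eqP->|/eqP->].
rewrite /tau.
set Gm := \matrix_(i, j) _.
have hGf : forall i j, Gm i j = Num.max (Num.max (F i j) (F i (j%:Z + 1) - d))
                                  (Num.max (F i (j%:Z - 1)) (F i j - d) - e).
  by move=> i j; rewrite mxE phi_m1 !phi_l1 /Fp subrK !addrA.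
apply: le_anti; apply/andP; split.
- apply: (LE (F := F) (c := cf) (ok := ok1)).
  + exact: Fp_conv.
  + exact: okr.
  + by [].
  + by move=> _ _; rewrite /cf /= addr0; apply: addr_ge0.
  + move=> i j.
    have : Gm i j <= F i j \/ Gm i j <= F i (j%:Z + 1) - d \/ Gm i j <= F i (j%:Z - 1) - e.
      by rewrite hGf; have := Hd; have := He; maxsplit; lra.
    case=> [h|[h|h]]; [exists 0 | exists 1 | exists (-1)]; by rewrite /ok1 /cf /= ?addr0 ?subr0.
  + move=> s p hs hm.
    have [A [B [hAB h1 h2 hV]]] := MONO d e r cc cc' l m n cf okr p hs hm.
    apply: (le_trans hV).
    have hk1 : (N - B <= N)%N by lia.
    apply: le_trans (maxto_ge _ hk1).
    have hk2 : (A <= N)%N by lia.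
    apply: le_trans (maxto_ge _ hk2) => /=.
    have h0 := proj1 (PsChar (Ps (N - B) A) hk1 hk2) (lexx _) 0%N ltac:(lia) ltac:(lia).
    have e0 : tc (A%:Z - 0%N%:Z - 1) (N%:Z - (N - B)%N%:Z + 0%N%:Z) = tauc d e r cc cc' l m n (A%:Z - 1) B%:Z.
      by apply: tauc_congr; lia.
    rewrite e0 in h0.
    have cm1 : cf (-1) = e by [].
    have cz : cf 0 = 0 by [].
    have cp1 : cf 1 = d by [].
    rewrite /costf cm1 cz cp1 mul0rn addr0 !mulr_natl.
    lra.
- rewrite maxto_le => k1 hk1; rewrite maxto_le => k2 hk2.
  have G2 : forall i (j : 'I_N) x, ok1 x -> F i ((j : nat)%:Z + x) - cf x <= Gm i j.
    move=> i j x /or3P[/eqP->|/eqP->|/eqP->]; rewrite hGf /cf /=; maxsplit; rewrite ?addr0 ?subr0; lra.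
  suff : Ps k1 k2 <= upm Gm + k1%:R * d + k2%:R * e by move=> h; have := Hd; have := He; lra.
  apply/(PsChar _ hk1 hk2) => i hi hi2.
  have := TCGE (cf := cf) (l := l) (m := m) (n := n) G2 (A := (k2 - i)%N) (B := (N - k1 + i)%N) ltac:(lia)
     ltac:(by move=> _) ltac:(by move=> _) ltac:(by move=> _).
  have cm1 : cf (-1) = e by [].
  have cz : cf 0 = 0 by [].
  have cp1 : cf 1 = d by [].
  rewrite /costf cm1 cz cp1 mul0rn addr0 !mulr_natl.
  have e0 : tc (k2%:Z - i%:Z - 1) (N%:Z - k1%:Z + i%:Z) = tauc d e r cc cc' l m n ((k2 - i)%N%:Z - 1) (N - k1 + i)%N%:Z.
    by apply: tauc_congr; lia.
  rewrite e0.
  have q1 : (k2 - i)%N%:R * e <= k2%:R * e by apply: ler_wpM2r => //; rewrite ler_nat; lia.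
  have q2 : (N - (N - k1 + i))%N%:R * d <= k1%:R * d by apply: ler_wpM2r => //; rewrite ler_nat; lia.
  rewrite !mulr_natl in q1 q2.
  move=> h; lra.
Qed.
End Case6.

Unset Implicit Arguments.

Theorem lemma9 (R : realFieldType) (N : nat) (d e : R) (r c c' : 'I_N -> R)
  (HN : (1 <= N)%N) (Hd : 0 < d) (He : 0 < e) (l m n : int) :
  let tau := tau d e r c c' in
  let tc := tauc d e r c c' l m n in
  let Ps := Psi d e r c c' l m n in
  let NN := (N : nat)%:Z in
  (tau (l + 1) m n
        = maxto N (fun k1 => tc (-1) (NN - k1%:Z) - k1%:R * d)/\
      tau l (m - 1) n
        = maxto N (fun k2 => tc (k2%:Z - 1) NN - k2%:R * e)/\
      tau (l + 1) m (n - 1)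
        = maxto N (fun k1 => tc (NN - k1%:Z - 1) NN - k1%:R * d)/\
      tau l (m - 1) (n + 1)
        = maxto N (fun k2 => tc (-1) k2%:Z - k2%:R * e)/\
      tau l m n = tc (-1) NN/\
      tau (l + 1) (m - 1) n
        = maxto N (fun k1 => maxto N (fun k2 => Ps k1 k2 - k1%:R * d - k2%:R * e))) /\
    (* the four case formulas defining Psi all hold (consistency on overlaps) *)
    (forall k1 k2 : nat, (k1 <= N)%N -> (k2 <= N)%N ->
          (k2 <= k1)%N -> (k2 <= N - k1)%N ->
          Ps k1 k2 = maxto k2 (fun i => tc (k2%:Z - i%:Z - 1) (NN - k1%:Z + i%:Z))) /\
    (forall k1 k2 : nat, (k1 <= N)%N -> (k2 <= N)%N ->
          (k2 <= N - k1)%N -> (k1 <= k2)%N ->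
          Ps k1 k2 = maxto k1 (fun i => tc (k2%:Z - i%:Z - 1) (NN - k1%:Z + i%:Z))) /\
    (forall k1 k2 : nat, (k1 <= N)%N -> (k2 <= N)%N ->
          (k2 <= k1)%N -> (N - k1 <= k2)%N ->
          Ps k1 k2 = maxto (N - k1) (fun i => tc (i%:Z - 1) (NN - k1%:Z + k2%:Z - i%:Z))) /\
    (forall k1 k2 : nat, (k1 <= N)%N -> (k2 <= N)%N ->
          (N - k1 <= k2)%N -> (k1 <= k2)%N ->
          Ps k1 k2 = maxto (N - k2) (fun i => tc (NN - k1%:Z - i%:Z - 1) (k2%:Z + i%:Z))) /\
    (* recurrences *)
    (forall k1 k2 : nat, (1 <= k1 <= N)%N -> (1 <= k2 <= N)%N ->
          k2%:Z - 1 < NN - k1%:Z ->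
          Ps k1 k2 = Num.max (Ps k1.-1 k2.-1) (tc (k2%:Z - 1) (NN - k1%:Z))) /\
    (forall k1 k2 : nat, (1 <= k1 <= N)%N -> (1 <= k2 <= N)%N ->
          k2%:Z - 1 > NN - k1%:Z ->
          Ps k1.-1 k2.-1 = Num.max (Ps k1 k2) (tc (NN - k1%:Z) (k2%:Z - 1))) /\
    (forall k1 k2 : nat, (1 <= k1 <= N)%N -> (1 <= k2 <= N)%N ->
          k2%:Z - 1 = NN - k1%:Z ->
          Ps k1 k2 = Ps k1.-1 k2.-1).
Proof.
cbv zeta.
have Hd' : 0 <= d by apply: ltW.
have He' : 0 <= e by apply: ltW.
split.
  split; first by apply: case1.
  split; first by apply: case2.
  split; first by apply: case3.
  split; first by apply: case4.
  split; first by apply: case5.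
  by apply: case6.
split; first by move=> k1 k2 h1 h2 h3 h4; apply: psi1.
split; first by move=> k1 k2 h1 h2 h3 h4; apply: psi2.
split; first by move=> k1 k2 h1 h2 h3 h4; apply: psi3.
split; first by move=> k1 k2 h1 h2 h3 h4; apply: psi4.
split; first by move=> k1 k2 h1 h2 h3; apply: psr1.
split; first by move=> k1 k2 h1 h2 h3; apply: psr2.
by move=> k1 k2 h1 h2 h3; apply: psr3.
Qed.
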